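(* Suppose the rewards are $R_{\mathcal{T}}(s)=\langle f(\mathcal{T}),W_Rs\rangle$ for a function $f:\mathcal{C}^n\to\mathbb{R}^d$ which, for each $i\in\{1,\dots,n\}$, is $L_i$-Lipschitz in the capability $\mathcal{T}_i$ of agent $i$ (other capabilities fixed) with respect to $|\cdot|_\infty$ on both domain and codomain, while the transition dynamics do not depend on the capabilities. Let $s_{max}=\max_{s\in S}\|W_Rs\|_1$. Then for any two team compositions $\mathcal{T}^x,\mathcal{T}^y\in\mathcal{C}^n$, $$|V^*_{\mathcal{T}^x}-V^*_{\mathcal{T}^y}|\le\frac{s_{max}\sum_{i=1}^nL_i|\mathcal{T}^x_i-\mathcal{T}^y_i|_\infty}{\gamma(1-\gamma)}.$$
   Context: Setting. $S\subset[0,1]^k$ is a finite set of states (each state identified with its feature vector), $U$ is a finite individual action set, there are $n$ agents with joint action set $U^n$, $\rho$ is an initial state distribution on $S$ and $\gamma\in(0,1)$ is the discount factor. Capability vectors lie in $\mathcal{C}\subseteq\Delta_{d-1}$, the probability simplex in $\mathbb{R}^d$; a team composition is $\mathcal{T}=(\mathcal{T}_1,\dots,\mathcal{T}_n)\in\mathcal{C}^n$. $W_R\in\mathbb{R}^{d\times k}$ is a fixed matrix and $P(s'|s,\mathbf{u})$ is a fixed transition kernel common to all team compositions. Team composition $\mathcal{T}$ defines the MMDP with reward $R_{\mathcal{T}}$ and transitions $P$; $V^*_{\mathcal{T}}(s)$ is its optimal expected discounted return from $s$ and $V^*_{\mathcal{T}}=\mathbb{E}_{s_0\sim\rho}V^*_{\mathcal{T}}(s_0)$.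 $|\cdot|_\infty$, $\|\cdot\|_1$ are the sup and $\ell_1$ norms. *)

(* Defs.v *)
From HB Require Import structures.
From mathcomp Require Import all_boot all_order all_algebra.
From mathcomp Require Import all_classical all_reals all_analysis.
Set Implicit Arguments. Unset Strict Implicit. Unset Printing Implicit Defensive.
Import Order.TTheory GRing.Theory Num.Theory.
Import numFieldNormedType.Exports.
Local Open Scope ring_scope.
Local Open Scope classical_set_scope.

Section MMDP.
Variable R : realType.

Definition supn (d : nat) (v : 'rV[R]_d) : R := \big[Num.max/0]_(j < d) `|v 0 j|.
Definition l1n (d : nat) (v : 'cV[R]_d) : R := \sum_(j < d) `|v j 0|.

Definition simplex (d : nat) : set 'rV[R]_d :=
  [set c | (forall j, 0 <= c 0 j) /\ \sum_(j < d) c 0 j = 1].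

Definition upd (n d : nat) (T : 'I_n -> 'rV[R]_d) (i : 'I_n) (c : 'rV[R]_d)
  : 'I_n -> 'rV[R]_d := fun j => if j == i then c else T j.

Definition reward (n d k : nat) (S : finType) (phi : S -> 'cV[R]_k)
  (W : 'M[R]_(d, k)) (f : ('I_n -> 'rV[R]_d) -> 'rV[R]_d)
  (T : 'I_n -> 'rV[R]_d) (s : S) : R :=
  \sum_(j < d) f T 0 j * (W *m phi s) j 0.

Section Values.
Variables (n : nat) (S U : finType).
Variable P : S -> {ffun 'I_n -> U} -> S -> R.

(* a stationary (randomized, centralized) joint policy: pi s u = prob. of joint action u in s *)
Definition is_policy (pi : S -> {ffun 'I_n -> U} -> R) : Prop :=
  forall s, (forall u, 0 <= pi s u) /\ \sum_u pi s u = 1.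

Fixpoint ptrans (pi : S -> {ffun 'I_n -> U} -> R) (t : nat) (s s' : S) : R :=
  match t with
  | 0 => (s == s')%:R
  | t'.+1 => \sum_(s'' : S) ptrans pi t' s s'' *
               \sum_(u : {ffun 'I_n -> U}) pi s'' u * P s'' u s'
  end.

Definition Vpi (gamma : R) (r : S -> R) (pi : S -> {ffun 'I_n -> U} -> R) (s : S) : R :=
  limn (series (fun t => gamma ^+ t * \sum_(s' : S) ptrans pi t s s' * r s')).

Definition Vstar_s (gamma : R) (r : S -> R) (s : S) : R :=
  sup [set Vpi gamma r pi s | pi in is_policy].

Definition Vstar (rho : S -> R) (gamma : R) (r : S -> R) : R :=
  \sum_(s : S) rho s * Vstar_s gamma r s.
End Values.
End MMDP.

(* Main.v *)
Require Import Defs.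
From HB Require Import structures.
From mathcomp Require Import all_boot all_order all_algebra.
From mathcomp Require Import all_classical all_reals all_analysis.
Import Order.TTheory GRing.Theory Num.Theory.
From mathcomp Require Import ring lra.
Import numFieldNormedType.Exports.
Local Open Scope ring_scope.
Local Open Scope classical_set_scope.

Section Aux.
Variable R : realType.

Lemma supn_ge0 d (v : 'rV[R]_d) : 0 <= supn v.
Proof. by rewrite /supn; elim/big_ind: _ => // x y hx hy; rewrite le_max hx. Qed.

Lemma supn_ub d (v : 'rV[R]_d) j : `|v 0 j| <= supn v.
Proof. exact: le_bigmax. Qed.

Lemma supn_le d (v : 'rV[R]_d) B : 0 <= B -> (forall j, `|v 0 j| <= B) -> supn v <= B.
Proof. by move=> h0 h; apply: bigmax_le. Qed.

Lemma supn_triangle d (u v : 'rV[R]_d) : supn (u + v) <= supn u + supn v.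
Proof.
apply: supn_le; first by rewrite addr_ge0 // supn_ge0.
move=> j; rewrite mxE; apply: le_trans (ler_normD _ _) _.
by rewrite lerD // supn_ub.
Qed.

Lemma series_bound (a : R ^nat) (M g : R) : 0 <= M -> 0 <= g -> g < 1 ->
  (forall t, `|a t| <= M * g ^+ t) ->
  cvgn (series a) /\ `|limn (series a)| <= M / (1 - g).
Proof.
move=> M0 g0 g1 ha.
have gn : `|g| < 1 by rewrite ger0_norm.
have cg := @is_cvg_geometric_series R M g gn.
have cn : cvgn [normed series a].
  apply: (series_le_cvg (v_ := geometric M g)) => //.
  - by move=> n; rewrite normr_ge0.
  - by move=> n; rewrite /geometric mulr_ge0 // exprn_ge0.
split; first exact: normed_cvg.
apply: le_trans (lim_series_norm cn) _.
rewrite -(cvg_lim _ (@cvg_geometric_series R M g gn)) //.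
apply: lim_series_le => //.
Qed.

Lemma dist_bound (S : finType) (p g : S -> R) E :
  (forall s, 0 <= p s) -> \sum_s p s = 1 -> (forall s, `|g s| <= E) ->
  `|\sum_s p s * g s| <= E.
Proof.
move=> p0 p1 hg; apply: le_trans (ler_norm_sum _ _ _) _.
apply: le_trans (_ : \sum_s p s * E <= E).
  by apply: ler_sum => s _; rewrite normrM ger0_norm // ler_wpM2l.
by rewrite -mulr_suml p1 mul1r.
Qed.

Section Pol.
Variables (n : nat) (S U : finType) (P : S -> {ffun 'I_n -> U} -> S -> R).
Hypothesis P_ge0 : forall s u s', 0 <= P s u s'.
Hypothesis P_sum1 : forall s u, \sum_(s' : S) P s u s' = 1.

Lemma ptrans_prob pi : is_policy pi -> forall t s,
  (forall s', 0 <= ptrans P pi t s s') /\ \sum_s' ptrans P pi t s s' = 1.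
Proof.
move=> hpi; elim=> [|t IH] s /=.
  split; first by move=> s'; rewrite ler0n.
  by rewrite (bigD1 s) //= eqxx big1 ?addr0 // => s0; rewrite eq_sym => /negPf ->.
have [h0 h1] := IH s; split.
  move=> s'; apply: sumr_ge0 => s'' _; apply: mulr_ge0 => //.
  by apply: sumr_ge0 => u _; apply: mulr_ge0 => //; case: (hpi s'').
rewrite exchange_big /=.
rewrite -[RHS]h1; apply: eq_bigr => s'' _. idtac.
rewrite -mulr_sumr; suff -> : \sum_i \sum_u pi s'' u * P s'' u i = 1 by rewrite mulr1.
rewrite exchange_big /= -[RHS](proj2 (hpi s'')); apply: eq_bigr => u _.
by rewrite -mulr_sumr P_sum1 mulr1.
Qed.

Lemma Vpi_diff (gamma : R) (r r' : S -> R) pi s E :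
  0 <= gamma -> gamma < 1 -> is_policy pi -> 0 <= E ->
  (forall s, `|r s - r' s| <= E) ->
  `|Vpi P gamma r pi s - Vpi P gamma r' pi s| <= E / (1 - gamma).
Proof.
move=> g0 g1 hpi E0 hE.
pose a (q : S -> R) := fun t => gamma ^+ t * \sum_s' ptrans P pi t s s' * q s'.
have bnd q B : 0 <= B -> (forall s, `|q s| <= B) ->
    cvgn (series (a q)) /\ `|limn (series (a q))| <= B / (1 - gamma).
  move=> B0 hq; apply: series_bound => // t.
  rewrite /a normrM ger0_norm ?exprn_ge0 // mulrC ler_wpM2r ?exprn_ge0 //.
  by have [h0 h1] := @ptrans_prob pi hpi t s; apply: dist_bound.
have cv q : cvgn (series (a q)).
  apply: (proj1 (bnd q (\sum_s0 `|q s0|) _ _)).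
    by apply: sumr_ge0 => ? _.
  move=> s0; rewrite (bigD1 s0) //= lerDl; exact: sumr_ge0.
rewrite /Vpi -/(a r) -/(a r') -lim_seriesB ?cv //.
have -> : (a r - a r') = a (fun s0 => r s0 - r' s0).
  apply/funext => t; rewrite !fctE /a -mulrBr -sumrB. congr (_ * _).
  by apply: eq_bigr => s0 _; rewrite mulrBr.
exact: (proj2 (bnd _ E E0 hE)).
Qed.

Lemma Vpi0 (gamma : R) pi s : Vpi P gamma (fun _ => 0) pi s = 0.
Proof.
rewrite /Vpi.
have -> : series (fun t => gamma ^+ t * \sum_s' ptrans P pi t s s' * (fun _ : S => 0 : R) s')
   = fun _ => 0.
  apply/funext => m; rewrite /series /= big1 // => t _.
  by rewrite big1 ?mulr0 // => s' _; rewrite mulr0.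
exact: lim_cst.
Qed.

Lemma sup_half (gamma : R) (r r' : S -> R) s E :
  0 <= gamma -> gamma < 1 -> 0 <= E -> (forall s, `|r s - r' s| <= E) ->
  sup [set Vpi P gamma r pi s | pi in is_policy (n:=n) (S:=S) (U:=U)]
   <= sup [set Vpi P gamma r' pi s | pi in is_policy (n:=n) (S:=S) (U:=U)] + E / (1 - gamma).
Proof.
move=> g0 g1 E0 hE.
set X := [set _ | _ in _]; set Y := [set _ | _ in _].
have [[pi0 hpi0]|nopol] := pselect (exists pi : S -> {ffun 'I_n -> U} -> R, is_policy pi); last first.
  have -> : X = set0.
    by apply/seteqP; split => x // [pi hpi _]; exfalso; apply: nopol; exists pi.
  have -> : Y = set0.
    by apply/seteqP; split => x // [pi hpi _]; exfalso; apply: nopol; exists pi.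
  by rewrite sup0 add0r divr_ge0 // subr_ge0 ltW.
have hY : has_ubound Y.
  exists ((\sum_s0 `|r' s0|) / (1 - gamma)) => x [pi hpi <-].
  have := @Vpi_diff gamma r' (fun _ => 0) pi s (\sum_s0 `|r' s0|) g0 g1 hpi
     (sumr_ge0 _ (fun _ _ => normr_ge0 _)).
  rewrite Vpi0 subr0 => h; apply: le_trans (ler_norm _) (h _).
  move=> s0; rewrite subr0 (bigD1 s0) //= lerDl; exact: sumr_ge0.
apply: ge_sup; first by exists (Vpi P gamma r pi0 s), pi0.
move=> x [pi hpi <-].
have := @Vpi_diff gamma r r' pi s E g0 g1 hpi E0 hE; rewrite ler_norml => /andP[_ h].
have : Vpi P gamma r' pi s <= sup Y by apply: ub_le_sup => //; exists pi.
move: h; set a := Vpi _ _ _ _ _; set b := Vpi _ _ _ _ _; lra.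
Qed.
End Pol.

Lemma telescope_f (k d n : nat) (C : set 'rV[R]_d)
  (f : ('I_n -> 'rV[R]_d) -> 'rV[R]_d) (L : 'I_n -> R)
  (f_lip : forall (T : 'I_n -> 'rV[R]_d) (i : 'I_n) (c c' : 'rV[R]_d),
     (forall j, C (T j)) -> C c -> C c' ->
     supn (f (upd T i c) - f (upd T i c')) <= L i * supn (c - c'))
  (Tx Ty : 'I_n -> 'rV[R]_d) (HTx : forall i, C (Tx i)) (HTy : forall i, C (Ty i)) :
  supn (f Tx - f Ty) <= \sum_(i < n) L i * supn (Tx i - Ty i).
Proof.
pose H m : 'I_n -> 'rV[R]_d := fun j => if (j < m)%N then Ty j else Tx j.
have HC m j : C (H m j) by rewrite /H; case: ifP.
have key m : (m <= n)%N ->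
    supn (f Tx - f (H m)) <= \sum_(i < n | (i < m)%N) L i * supn (Tx i - Ty i).
  elim: m => [|m IH] hm.
    have -> : H 0%N = Tx by apply/funext => j.
    rewrite subrr big_pred0 //; apply: supn_le => // j; rewrite !mxE normr0 //.
  have hmn : (m < n)%N by [].
  pose i := Ordinal hmn.
  have E1 : H m.+1 = upd (H m) i (Ty i).
    apply/funext => j; rewrite /H /upd; case: eqP => [->|/eqP ne] /=; first by rewrite ltnSn.
    rewrite ltnS leq_eqVlt; suff -> : (val j == m) = false by [].
    by apply/negP => /eqP h; move/eqP: ne; apply; apply: val_inj.
  have E0 : H m = upd (H m) i (Tx i).
    apply/funext => j; rewrite /H /upd; case: eqP => [->|//] /=; by rewrite ltnn.
  have -> : f Tx - f (H m.+1) = (f Tx - f (H m)) + (f (H m) - f (H m.+1)) by rewrite addrA subrK.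
  apply: le_trans (@supn_triangle _ _ _) _.
  rewrite (bigD1 i) //= addrC; apply: lerD.
    apply: le_trans (IH (ltnW hm)) _; rewrite le_eqVlt; apply/orP; left; apply/eqP.
    apply: eq_bigl => j /=.
    have -> : (j != i) = (val j != m) by rewrite -(inj_eq val_inj).
    by rewrite ltnS; case: ltngtP.
  by rewrite {1}E0 E1; apply: f_lip.
have eTy : H n = Ty by apply/funext => j; rewrite /H ltn_ord.
have := key n (leqnn n); rewrite eTy; move=> hk; apply: (le_trans hk).
by rewrite le_eqVlt; apply/orP; left; apply/eqP; apply: eq_bigl => j; rewrite ltn_ord.
Qed.
End Aux.

Theorem theorem6 (R : realType) (k d n : nat) (S U : finType)
  (phi : S -> 'cV[R]_k)
  (phi_inj : injective phi)
  (phi_unit : forall s j, 0 <= phi s j 0 <= 1)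
  (P : S -> {ffun 'I_n -> U} -> S -> R)
  (P_ge0 : forall s u s', 0 <= P s u s')
  (P_sum1 : forall s u, \sum_(s' : S) P s u s' = 1)
  (rho : S -> R) (rho_ge0 : forall s, 0 <= rho s) (rho_sum1 : \sum_(s : S) rho s = 1)
  (gamma : R) (gamma_gt0 : 0 < gamma) (gamma_lt1 : gamma < 1)
  (C : set 'rV[R]_d) (C_simplex : C `<=` @simplex R d)
  (W : 'M[R]_(d, k))
  (f : ('I_n -> 'rV[R]_d) -> 'rV[R]_d) (L : 'I_n -> R)
  (f_lip : forall (T : 'I_n -> 'rV[R]_d) (i : 'I_n) (c c' : 'rV[R]_d),
     (forall j, C (T j)) -> C c -> C c' ->
     supn (f (upd T i c) - f (upd T i c')) <= L i * supn (c - c'))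
  (Tx Ty : 'I_n -> 'rV[R]_d) (HTx : forall i, C (Tx i)) (HTy : forall i, C (Ty i)) :
  let smax := \big[Num.max/0]_(s : S) l1n (W *m phi s) in
  `| Vstar P rho gamma (reward phi W f Tx) - Vstar P rho gamma (reward phi W f Ty) |
    <= smax * (\sum_(i < n) L i * supn (Tx i - Ty i)) / (gamma * (1 - gamma)).
Proof.
cbv zeta; set smax := \big[Num.max/0]_(s : S) l1n (W *m phi s).
set K := \sum_(i < n) L i * supn (Tx i - Ty i).
have hK := @telescope_f R k d n C f L f_lip Tx Ty HTx HTy; rewrite -/K in hK.
have K0 : 0 <= K := le_trans (@supn_ge0 R d _) hK.
have sm0 : 0 <= smax by apply: bigmax_ge_id.
have g0 : 0 <= gamma by apply: ltW.
set E := smax * K.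
have E0 : 0 <= E by rewrite mulr_ge0.
have hr s : `|reward phi W f Tx s - reward phi W f Ty s| <= E.
  rewrite /reward -sumrB.
  apply: le_trans (ler_norm_sum _ _ _) _.
  apply: le_trans (_ : \sum_j supn (f Tx - f Ty) * `|(W *m phi s) j 0| <= _).
    apply: ler_sum => j _; rewrite -mulrBl normrM ler_wpM2r //.
    by have := @supn_ub R d (f Tx - f Ty) j; rewrite !mxE.
  rewrite -mulr_sumr /E mulrC; apply: ler_pM => //.
    by apply: sumr_ge0 => ? _.
    exact: (@supn_ge0 R d _).
  have := le_bigmax 0 (fun s0 => l1n (W *m phi s0)) s; rewrite -/smax; exact.
have hv s : `|Vstar_s P gamma (reward phi W f Tx) s - Vstar_s P gamma (reward phi W f Ty) s|
    <= E / (1 - gamma).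
  have h1 := @sup_half R n S U P P_ge0 P_sum1 gamma (reward phi W f Tx) (reward phi W f Ty) s E g0 gamma_lt1 E0 hr.
  have h2 := @sup_half R n S U P P_ge0 P_sum1 gamma (reward phi W f Ty) (reward phi W f Tx) s E g0 gamma_lt1 E0
    (fun s0 => ltac:(by rewrite distrC; exact: hr)).
  rewrite /Vstar_s; move: h1 h2; set a := sup _; set b := sup _; set e := E / _.
  by move=> h1 h2; rewrite ler_norml; apply/andP; split; lra.
have main : `| Vstar P rho gamma (reward phi W f Tx) - Vstar P rho gamma (reward phi W f Ty) |
    <= E / (1 - gamma).
  rewrite /Vstar -sumrB.
  under eq_bigr do rewrite -mulrBr.
  exact: dist_bound.
apply: le_trans main _.
have -> : smax * K / (gamma * (1 - gamma)) = (E / (1 - gamma)) / gamma.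
  by rewrite /E invfM; ring.
have h1 : 0 <= E / (1 - gamma) by rewrite divr_ge0 // subr_ge0 ltW.
by rewrite ler_pdivlMr // ler_piMr // ltW.
Qed.
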